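(* Let $n>3$ and let $a<b<c$ be elements of $\mathcal{C}_n$. Then the triangle $\triangle^{(n)}\{a,b,c\}$ has at least one right identity and has no left identity.
   Context: $\mathcal{C}_n=\{0,1,\dots,n-1\}$ with its usual order; $\widehat{\mathcal{E}}_{\mathcal{C}_n}$ is the set of all order-preserving maps $\mathcal{C}_n\to\mathcal{C}_n$ (not required to fix $0$), a semiring with $(\alpha+\beta)(x)=\max(\alpha(x),\beta(x))$ and $(\alpha\cdot\beta)(x)=\beta(\alpha(x))$. The triangle $\triangle^{(n)}\{a,b,c\}$ is the subsemiring of all $\alpha\in\widehat{\mathcal{E}}_{\mathcal{C}_n}$ with image contained in $\{a,b,c\}$. A right (resp. left) identity of a semiring $R$ is $e\in R$ with $xe=x$ (resp. $ex=x$) for all $x\in R$. *)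

(* Defs.v *)
From mathcomp Require Import all_boot.
Set Implicit Arguments. Unset Strict Implicit. Unset Printing Implicit Defensive.

(* C_n = 'I_n with its usual order; maps C_n -> C_n are finite functions. *)
Definition emap (n : nat) := {ffun 'I_n -> 'I_n}.

(* order-preserving maps (not required to fix 0) *)
Definition order_preserving n (f : emap n) : bool :=
  [forall x : 'I_n, forall y : 'I_n, (x <= y) ==> (f x <= f y)].

Definition Ehat n : {set emap n} := [set f | order_preserving f].

Definition sadd n (al be : emap n) : emap n :=
  [ffun x => if al x <= be x then be x else al x].
Definition smul n (al be : emap n) : emap n := [ffun x => be (al x)].

Definition triangle n (a b c : 'I_n) : {set emap n} :=
  [set f in Ehat n | [forall x, f x \in [:: a; b; c]]].

Definition is_right_identity n (R : {set emap n}) (e : emap n) : Prop :=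
  e \in R /\ forall x, x \in R -> smul x e = x.
Definition is_left_identity n (R : {set emap n}) (e : emap n) : Prop :=
  e \in R /\ forall x, x \in R -> smul e x = x.

(* Main.v *)
Require Import Defs.
From mathcomp Require Import all_boot.
From mathcomp Require Import zify.

Lemma in_tri n (a b c : 'I_n) (f : emap n) :
  f \in triangle a b c ->
  (forall x y : 'I_n, x <= y -> f x <= f y) /\ (forall x, f x \in [:: a; b; c]).
Proof.
rewrite inE => /andP[]; rewrite inE /order_preserving => /forallP H /forallP H2.
split=> // x y le; exact: (implyP (forallP (H x) y) le).
Qed.

Lemma tri_in n (a b c : 'I_n) (f : emap n) :
  (forall x y : 'I_n, x <= y -> f x <= f y) -> (forall x, f x \in [:: a; b; c]) ->
  f \in triangle a b c.
Proof.
move=> H1 H2; rewrite inE; apply/andP; split; last by apply/forallP.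
rewrite inE; apply/forallP=> x; apply/forallP=> y; apply/implyP; exact: H1.
Qed.

Theorem proposition24 (n : nat) (a b c : 'I_n) :
  3 < n -> a < b -> b < c ->
  (exists e, is_right_identity (triangle a b c) e) /\
  ~ (exists e, is_left_identity (triangle a b c) e).
Proof.
move=> hn hab hbc; split.
  exists [ffun y : 'I_n => if y <= a then a else if y <= b then b else c].
  split.
    apply: tri_in => [x y le|x]; rewrite !ffunE.
      by do ![case: ifP]; lia.
    by do ![case: ifP]; rewrite !inE eqxx ?orbT.
  move=> x /in_tri [_ H]; apply/ffunP=> y; rewrite !ffunE.
  move: (H y); rewrite !inE => /or3P[]/eqP ->; rewrite ?leqnn //.
    by have -> : (b <= a) = false by lia.
  have -> : (c <= a) = false by lia.
  by have -> : (c <= b) = false by lia.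
case=> e [/in_tri [_ He] H].
have: 0 < #|~: [set a; b; c]|.
  have := cardsC [set a; b; c]; rewrite card_ord.
  have : #|[set a; b; c]| <= 3.
    rewrite setUC cardsU1 cards2; case: (c \notin _); case: (a != b); by [].
  lia.
case/card_gt0P => y; rewrite !inE negb_or negb_or => /andP[/andP[ya yb] yc].
set z := e y.
have zy : z != y.
  apply/eqP=> E; have := He y; rewrite -/z E !inE.
  by rewrite (negbTE ya) (negbTE yb) (negbTE yc).
pose k := if z <= y then z else y.
pose x := [ffun t : 'I_n => if t <= k then a else b].
have xin : x \in triangle a b c.
  apply: tri_in => [s t le|t]; rewrite !ffunE.
    by do ![case: ifP]; lia.
  by case: ifP; rewrite !inE eqxx ?orbT.
have := H x xin; move/ffunP/(_ y); rewrite !ffunE -/z /k.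
move: zy; rewrite -val_eqE /=.
by do ![case: ifP]; try lia; move=> _ _ _ _ E; move: hab; rewrite E; lia.
Qed.
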